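(* Let $X$ solve $dX_t=\mu_X(X_t;\theta)\,dt+\sigma_X(X_t;\theta)\,dW_t$ on $\mathcal{X}=(x_l,x_r)$ and let $Y_t=V(X_t)$, with structure $\mathcal{S}=(\theta,V)$ ($\theta$ the data-generating parameter). Assume: $\mu_X(\cdot;\theta)$ and $\sigma_X^2(\cdot;\theta)>0$ are twice continuously differentiable; $V$ is strictly increasing and twice continuously differentiable with inverse $U=V^{-1}$; and the drift $\mu_Y$ and diffusion $\sigma_Y^2$ of $Y$ are nonparametrically identified from the discretely sampled process $\{Y_{i\Delta}\}$. Define the Lamperti transform $\gamma(x;\theta)=\int_{x^*}^x \frac{1}{\sigma_X(z;\theta)}dz$ for some $x^*\in\mathcal{X}$, with range $\bar{\mathcal{X}}=(\bar x_l,\bar x_r)$, $\bar x_l=\lim_{x\to x_l}\gamma(x;\theta)$, $\bar x_r=\lim_{x\to x_r}\gamma(x;\theta)$, and $$\mu_{\bar X}(\bar x;\vartheta)=\frac{\mu_X(\gamma^{-1}(\bar x;\vartheta);\vartheta)}{\sigma_X(\gamma^{-1}(\bar x;\vartheta);\vartheta)}-\frac12\frac{\partial\sigma_X}{\partial x}(\gamma^{-1}(\bar x;\vartheta);\vartheta).$$ Then $\mathcal{S}$ is identified if and only if the following holds: there exist no $\eta\neq0$ and $\tilde\theta\neq\theta$ such that $\mu_{\bar X}(\bar x;\tilde\theta)=\mu_{\bar X}(\bar x+\eta;\theta)$ for all $\bar x\in\bar{\mathcal{X}}$.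
   Context: For a structure $\mathcal{S}=(\theta,V)$ with $U=V^{-1}$, the drift and diffusion of $Y$ are $\mu_Y(y;\mathcal{S})=\frac{\mu_X(U(y);\theta)}{U'(y)}-\frac12\sigma_X^2(U(y);\theta)\frac{U''(y)}{U'(y)^3}$ and $\sigma_Y(y;\mathcal{S})=\frac{\sigma_X(U(y);\theta)}{U'(y)}$. Two structures are observationally equivalent ($\mathcal{S}\sim\tilde{\mathcal{S}}$) if they yield identical $\mu_Y(\cdot)$ and $\sigma_Y(\cdot)$ on the domain of $Y$. $\mathcal{S}$ is identified (within the model of admissible structures $(\tilde\theta,\tilde V)$, $\tilde\theta\in\Theta$, $\tilde V$ strictly increasing and twice continuously differentiable) if $\mathcal{S}\sim\tilde{\mathcal{S}}$ implies $\mathcal{S}=\tilde{\mathcal{S}}$. *)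

(* Defs.v *)
From Stdlib Require Import Reals ClassicalEpsilon.
From Coquelicot Require Import Coquelicot.
Open Scope R_scope.

Definition inX (xl xr : Rbar) (x : R) : Prop := Rbar_lt xl x /\ Rbar_lt x xr.

Definition C2_on (D : R -> Prop) (f : R -> R) : Prop :=
  forall x, D x ->
    ex_derive f x /\ ex_derive (Derive f) x /\ continuous (Derive (Derive f)) x.

(* Admissible transformation V: strictly increasing, C^2 on X, and with an
   inverse U = V^{-1} differentiable with nonzero derivative (V' > 0), so that
   the formulas for mu_Y, sigma_Y (which divide by U') make sense. *)
Definition admissible (xl xr : Rbar) (V : R -> R) : Prop :=
  (forall x y, inX xl xr x -> inX xl xr y -> x < y -> V x < V y) /\
  C2_on (inX xl xr) V /\
  (forall x, inX xl xr x -> 0 < Derive V x).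

Definition imageV (xl xr : Rbar) (V : R -> R) (y : R) : Prop :=
  exists x, inX xl xr x /\ V x = y.

(* U = V^{-1} on V(X) (chosen by classical description; unique since V is
   strictly increasing). *)
Definition Uinv (xl xr : Rbar) (V : R -> R) (y : R) : R :=
  epsilon (inhabits 0) (fun x => inX xl xr x /\ V x = y).

Section Model.
Context {Theta : Type} (mu sigma : Theta -> R -> R) (xl xr : Rbar).

Definition muY (th : Theta) (V : R -> R) (y : R) : R :=
  let U := Uinv xl xr V in
  mu th (U y) / Derive U y
  - / 2 * (sigma th (U y)) ^ 2 * Derive (Derive U) y / (Derive U y) ^ 3.

Definition sigmaY (th : Theta) (V : R -> R) (y : R) : R :=
  let U := Uinv xl xr V in
  sigma th (U y) / Derive U y.

Definition obs_equiv (th : Theta) (V : R -> R) (th' : Theta) (V' : R -> R) : Prop :=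
  (forall y, imageV xl xr V y <-> imageV xl xr V' y) /\
  (forall y, imageV xl xr V y ->
     muY th V y = muY th' V' y /\ sigmaY th V y = sigmaY th' V' y).

Definition identified (th : Theta) (V : R -> R) : Prop :=
  forall th' V', admissible xl xr V' -> obs_equiv th V th' V' ->
    th' = th /\ (forall x, inX xl xr x -> V' x = V x).

Definition gamma (xstar : R) (th : Theta) (x : R) : R :=
  RInt (fun z => / sigma th z) xstar x.

Definition inXbar (xstar : R) (th : Theta) (xb : R) : Prop :=
  exists x, inX xl xr x /\ gamma xstar th x = xb.

Definition gamma_inv (xstar : R) (th : Theta) (xb : R) : R :=
  epsilon (inhabits 0) (fun x => inX xl xr x /\ gamma xstar th x = xb).

Definition muXbar (xstar : R) (th : Theta) (xb : R) : R :=
  let x := gamma_inv xstar th xb in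
  mu th x / sigma th x - / 2 * Derive (sigma th) x.

End Model.

(* Main.v *)
Require Import Defs.
From Stdlib Require Import Reals Ranalysis5 Lra ClassicalEpsilon Classical.
From Coquelicot Require Import Coquelicot.
Open Scope R_scope.

Definition openD (D : R -> Prop) :=
  forall x, D x -> exists e : posreal, forall z, Rabs (z - x) < e -> D z.
Definition convD (D : R -> Prop) :=
  forall a b z, D a -> D b -> a <= z <= b -> D z.

Lemma inX_open xl xr : openD (inX xl xr).
Proof.
  intros x [H1 H2].
  assert (E1 : exists e1, 0 < e1 /\ forall z, Rabs (z - x) < e1 -> Rbar_lt xl z).
  { destruct xl as [l| |]; simpl in *.
    - exists (x - l); split; [lra|]. intros z Hz. apply Rabs_def2 in Hz. lra.
    - contradiction.
    - exists 1; split; [lra|]. auto. }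
  assert (E2 : exists e2, 0 < e2 /\ forall z, Rabs (z - x) < e2 -> Rbar_lt z xr).
  { destruct xr as [r| |]; simpl in *.
    - exists (r - x); split; [lra|]. intros z Hz. apply Rabs_def2 in Hz. lra.
    - exists 1; split; [lra|]. auto.
    - contradiction. }
  destruct E1 as [e1 [He1 P1]], E2 as [e2 [He2 P2]].
  assert (He : 0 < Rmin e1 e2) by (apply Rmin_glb_lt; auto).
  exists (mkposreal _ He). intros z Hz; simpl in Hz. split.
  - apply P1. eapply Rlt_le_trans; [exact Hz| apply Rmin_l].
  - apply P2. eapply Rlt_le_trans; [exact Hz| apply Rmin_r].
Qed.

Lemma inX_conv xl xr : convD (inX xl xr).
Proof.
  intros a b z [Ha1 Ha2] [Hb1 Hb2] [H1 H2]. split.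
  - destruct xl as [l| |]; simpl in *; auto; lra.
  - destruct xr as [r| |]; simpl in *; auto; lra.
Qed.

Lemma openD_locally D x : openD D -> D x -> locally x D.
Proof.
  intros HD Hx. destruct (HD x Hx) as [e He]. exists e. intros y Hy. apply He. exact Hy.
Qed.

Lemma derive_cpt f x : ex_derive f x -> continuity_pt f x.
Proof. intros H. apply continuity_pt_filterlim. exact (@ex_derive_continuous R_AbsRing R_NormedModule f x H). Qed.

Definition img (D : R -> Prop) (f : R -> R) (y : R) : Prop := exists x, D x /\ f x = y.
Definition inv (D : R -> Prop) (f : R -> R) (y : R) : R :=
  epsilon (inhabits 0) (fun x => D x /\ f x = y).

Section Inv.
Variables (D : R -> Prop) (f : R -> R).
Hypothesis Dop : openD D.
Hypothesis Dcv : convD D.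
Hypothesis Hinc : forall x y, D x -> D y -> x < y -> f x < f y.
Hypothesis Hder : forall x, D x -> ex_derive f x.

Lemma inv_spec y : img D f y -> D (inv D f y) /\ f (inv D f y) = y.
Proof. intros H. unfold inv. apply (epsilon_spec (inhabits 0) (fun x => D x /\ f x = y)). exact H. Qed.

Lemma f_inj x y : D x -> D y -> f x = f y -> x = y.
Proof.
  intros Hx Hy E. destruct (Rtotal_order x y) as [h|[h|h]]; auto.
  - apply Hinc in h; auto; lra.
  - apply Hinc in h; auto; lra.
Qed.

Lemma inv_f x : D x -> inv D f (f x) = x.
Proof.
  intros Hx. destruct (inv_spec (f x)) as [H1 H2]. exists x; auto.
  apply f_inj; auto.
Qed.

Lemma f_le x y : D x -> D y -> f x <= f y -> x <= y.
Proof.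
  intros Hx Hy H. destruct (Rle_or_lt x y) as [h|h]; auto.
  apply Hinc in h; auto; lra.
Qed.

Lemma inv_incr y1 y2 : img D f y1 -> img D f y2 -> y1 < y2 -> inv D f y1 < inv D f y2.
Proof.
  intros H1 H2 h. destruct (inv_spec _ H1) as [a b]. destruct (inv_spec _ H2) as [c d].
  destruct (Rle_or_lt (inv D f y2) (inv D f y1)) as [k|k]; auto.
  destruct (Rle_lt_or_eq_dec _ _ k) as [k'|k'].
  - apply Hinc in k'; auto; lra.
  - rewrite k' in d. lra.
Qed.

Lemma ivt a b z : D a -> D b -> a < b -> f a < z < f b -> img D f z.
Proof.
  intros Ha Hb hab [h1 h2].
  destruct (IVT_interv (fun t => f t - z) a b) as [x [Hx E]]; auto.
  - intros t Ht. apply continuity_pt_minus. apply derive_cpt, Hder. apply (Dcv a b); auto.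
    apply continuity_pt_const. intros u v; auto.
  - lra. - lra.
  - exists x. split. apply (Dcv a b); auto. lra.
Qed.

Lemma img_conv y1 y2 z : img D f y1 -> img D f y2 -> y1 <= z <= y2 -> img D f z.
Proof.
  intros [x1 [H1 E1]] [x2 [H2 E2]] [h1 h2]. subst.
  destruct (Rle_lt_or_eq_dec _ _ h1) as [k1|k1]; [| subst; exists x1; auto].
  destruct (Rle_lt_or_eq_dec _ _ h2) as [k2|k2]; [| subst; exists x2; auto].
  apply (ivt x1 x2); auto.
  destruct (Rle_or_lt x2 x1) as [k|k]; auto.
  destruct (Rle_lt_or_eq_dec _ _ k) as [k'|k'].
  - apply Hinc in k'; auto; lra.
  - subst; lra.
Qed.

Lemma img_bracket y : img D f y -> exists lb ub, D lb /\ D ub /\ lb < inv D f y < ub.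
Proof.
  intros Hy. destruct (inv_spec _ Hy) as [Dx Ex].
  destruct (Dop _ Dx) as [e He].
  exists (inv D f y - e/2), (inv D f y + e/2).
  pose proof (cond_pos e).
  split; [apply He|split;[apply He|]]; try lra.
  - rewrite Rabs_left; lra.
  - rewrite Rabs_right; lra.
Qed.

Lemma img_open : openD (img D f).
Proof.
  intros y Hy. destruct (img_bracket y Hy) as [lb [ub [Hl [Hu [h1 h2]]]]].
  destruct (inv_spec _ Hy) as [Dx Ex].
  pose proof (Hinc _ _ Hl Dx h1). pose proof (Hinc _ _ Dx Hu h2). rewrite Ex in *.
  assert (He : 0 < Rmin (y - f lb) (f ub - y)) by (apply Rmin_glb_lt; lra).
  exists (mkposreal _ He). intros z Hz. simpl in Hz.
  pose proof (Rmin_l (y - f lb) (f ub - y)). pose proof (Rmin_r (y - f lb) (f ub - y)).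
  apply Rabs_def2 in Hz.
  apply (img_conv (f lb) (f ub)); [exists lb; auto| exists ub; auto| lra].
Qed.

Lemma inv_cont y : img D f y -> continuity_pt (inv D f) y.
Proof.
  intros Hy. destruct (img_bracket y Hy) as [lb [ub [Hl [Hu [h1 h2]]]]].
  destruct (inv_spec _ Hy) as [Dx Ex].
  pose proof (Hinc _ _ Hl Dx h1). pose proof (Hinc _ _ Dx Hu h2). rewrite Ex in *.
  assert (Hlu : lb < ub) by lra.
  assert (Hin : forall z, f lb <= z -> z <= f ub -> img D f z).
  { intros z a b. apply (img_conv (f lb) (f ub)); [exists lb; auto| exists ub; auto| lra]. }
  apply (continuity_pt_recip_interv f (inv D f) lb ub Hlu).
  - intros a b ha hab hb. apply Hinc; auto. apply (Dcv lb ub); auto; lra. apply (Dcv lb ub); auto; lra.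
  - intros z a b. unfold comp, id. apply inv_spec. apply Hin; auto.
  - intros z a b. destruct (inv_spec z (Hin z a b)) as [Dz Ez]. split.
    + apply f_le; auto. lra.
    + apply f_le; auto. lra.
  - intros a Ha. apply derive_cpt, Hder. apply (Dcv lb ub); auto.
  - lra.
Qed.

Lemma inv_derive y : img D f y -> Derive f (inv D f y) <> 0 ->
  is_derive (inv D f) y (/ Derive f (inv D f y)).
Proof.
  intros Hy Hd. destruct (img_bracket y Hy) as [lb [ub [Hl [Hu [h1 h2]]]]].
  destruct (inv_spec _ Hy) as [Dx Ex].
  pose proof (Hinc _ _ Hl Dx h1). pose proof (Hinc _ _ Dx Hu h2). rewrite Ex in *.
  assert (Hin : forall z, f lb <= z <= f ub -> img D f z).
  { intros z a. apply (img_conv (f lb) (f ub)); [exists lb; auto| exists ub; auto| lra]. }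
  assert (Prf : forall a, inv D f (f lb) <= a <= inv D f (f ub) -> derivable_pt f a).
  { intros a Ha. rewrite !inv_f in Ha by auto.
    exists (Derive f a). apply is_derive_Reals. apply Derive_correct. apply Hder.
    apply (Dcv lb ub); auto. }
  assert (Hg : inv D f (f lb) <= inv D f y <= inv D f (f ub)).
  { rewrite !inv_f by auto. lra. }
  pose proof (derivable_pt_lim_recip_interv f (inv D f) (f lb) (f ub) y Prf
    (inv_cont y Hy) ltac:(lra) ltac:(lra) Hg) as K.
  assert (Eq : derive_pt f (inv D f y) (Prf (inv D f y) Hg) = Derive f (inv D f y)).
  { apply derive_pt_eq_0. apply is_derive_Reals. apply Derive_correct. apply Hder. auto. }
  rewrite Eq in K. apply is_derive_Reals.
  replace (/ Derive f (inv D f y)) with (1 / Derive f (inv D f y)) by (field; auto).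
  apply K; auto.
  intros z Hz. unfold comp, id. apply inv_spec. apply Hin. auto.
Qed.

End Inv.

Lemma incr_of_deriv D f df : convD D ->
  (forall x, D x -> is_derive f x (df x) /\ 0 < df x) ->
  forall x y, D x -> D y -> x < y -> f x < f y.
Proof.
  intros Dcv H x y Hx Hy hxy.
  destruct (MVT_gen f x y df) as [c [Hc E]].
  - intros z Hz. rewrite Rmin_left in Hz by lra. rewrite Rmax_right in Hz by lra.
    apply H. apply (Dcv x y); auto; lra.
  - intros z Hz. rewrite Rmin_left in Hz by lra. rewrite Rmax_right in Hz by lra.
    apply derive_cpt. eexists. apply H. apply (Dcv x y); auto.
  - rewrite Rmin_left in Hc by lra. rewrite Rmax_right in Hc by lra.
    assert (0 < df c) by (apply H; apply (Dcv x y); auto).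
    assert (0 < df c * (y - x)) by (apply Rmult_lt_0_compat; lra). lra.
Qed.

Lemma cont_cpt f x : continuity_pt f x -> continuous f x.
Proof. intros H. apply continuity_pt_filterlim in H. exact H. Qed.
Lemma cpt_cont f x : continuous f x -> continuity_pt f x.
Proof. intros H. apply continuity_pt_filterlim. exact H. Qed.

Lemma cpt_mult f g x : continuity_pt f x -> continuity_pt g x -> continuity_pt (fun t => f t * g t) x.
Proof. intros. exact (continuity_pt_mult f g x H H0). Qed.
Lemma cpt_plus f g x : continuity_pt f x -> continuity_pt g x -> continuity_pt (fun t => f t + g t) x.
Proof. intros. exact (continuity_pt_plus f g x H H0). Qed.
Lemma cpt_opp f x : continuity_pt f x -> continuity_pt (fun t => - f t) x.
Proof. intros. exact (continuity_pt_opp f x H). Qed.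
Lemma cpt_inv f x : continuity_pt f x -> f x <> 0 -> continuity_pt (fun t => / f t) x.
Proof. intros. exact (continuity_pt_inv f x H H0). Qed.
Lemma cpt_comp f g x : continuity_pt g x -> continuity_pt f (g x) -> continuity_pt (fun t => f (g t)) x.
Proof. intros. exact (continuity_pt_comp g f x H H0). Qed.
Lemma cpt_const c x : continuity_pt (fun _ => c) x.
Proof. apply continuity_pt_const. intros u v; auto. Qed.

Lemma Derive_loc D f f1 x : openD D -> D x -> (forall z, D z -> is_derive f z (f1 z)) ->
  locally x (fun z => Derive f z = f1 z).
Proof.
  intros Dop Dx H. destruct (Dop x Dx) as [e He]. exists e. intros y Hy.
  apply is_derive_unique. apply H. apply He. exact Hy.
Qed.

Lemma C2_intro D f f1 f2 : openD D ->
  (forall x, D x -> is_derive f x (f1 x) /\ is_derive f1 x (f2 x) /\ continuity_pt f2 x) ->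
  C2_on D f.
Proof.
  intros Dop H x Dx.
  assert (L1 := Derive_loc D f f1 x Dop Dx (fun z Hz => proj1 (H z Hz))).
  split; [eexists; apply (H x Dx)|split].
  - eexists. eapply is_derive_ext_loc.
    2: apply (H x Dx).
    eapply filter_imp; [|exact L1]. simpl. intros z E; auto.
  - apply (continuous_ext_loc _ f2).
    + destruct (Dop x Dx) as [e He]. exists e. intros y Hy.
      assert (Dy : D y) by (apply He; exact Hy).
      symmetry. rewrite (Derive_ext_loc (Derive f) f1 y).
      apply is_derive_unique. apply (H y Dy).
      apply (Derive_loc D f f1 y Dop Dy (fun z Hz => proj1 (H z Hz))).
    + apply cont_cpt. apply (H x Dx).
Qed.

Lemma C2_d1 D f x : C2_on D f -> D x -> is_derive f x (Derive f x).
Proof. intros H Dx. apply Derive_correct. apply (H x Dx). Qed.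
Lemma C2_d2 D f x : C2_on D f -> D x -> is_derive (Derive f) x (Derive (Derive f) x).
Proof. intros H Dx. apply Derive_correct. apply (H x Dx). Qed.
Lemma C2_c2 D f x : C2_on D f -> D x -> continuity_pt (Derive (Derive f)) x.
Proof. intros H Dx. apply cpt_cont. apply (H x Dx). Qed.
Lemma C2_c1 D f x : C2_on D f -> D x -> continuity_pt (Derive f) x.
Proof. intros H Dx. apply derive_cpt. apply (H x Dx). Qed.
Lemma C2_c0 D f x : C2_on D f -> D x -> continuity_pt f x.
Proof. intros H Dx. apply derive_cpt. apply (H x Dx). Qed.

Lemma is_derive_mult' f g x df dg : is_derive f x df -> is_derive g x dg ->
  is_derive (fun t => f t * g t) x (df * g x + f x * dg).
Proof. intros. apply (is_derive_mult f g x df dg H H0). intros; apply Rmult_comm. Qed.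
Lemma is_derive_comp' f g x df dg : is_derive f (g x) df -> is_derive g x dg ->
  is_derive (fun t => f (g t)) x (df * dg).
Proof. intros. rewrite Rmult_comm. apply (is_derive_comp f g x df dg H H0). Qed.

Lemma C2_comp D1 D2 f g : openD D1 -> openD D2 -> C2_on D1 f -> C2_on D2 g ->
  (forall x, D2 x -> D1 (g x)) -> C2_on D2 (fun x => f (g x)).
Proof.
  intros O1 O2 Hf Hg Hm.
  apply (C2_intro D2 _ (fun x => Derive f (g x) * Derive g x)
    (fun x => Derive (Derive f) (g x) * Derive g x * Derive g x + Derive f (g x) * Derive (Derive g) x)); auto.
  intros x Dx. pose proof (Hm x Dx) as Dgx. split; [|split].
  - apply is_derive_comp'. apply (C2_d1 D1); auto. apply (C2_d1 D2); auto.
  - apply (is_derive_mult' (fun t => Derive f (g t)) (Derive g)).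
    apply (is_derive_comp' (Derive f) g). apply (C2_d2 D1); auto. apply (C2_d1 D2); auto.
    apply (C2_d2 D2); auto.
  - pose proof (C2_c0 D2 g x Hg Dx). pose proof (C2_c1 D2 g x Hg Dx). pose proof (C2_c2 D2 g x Hg Dx).
    pose proof (C2_c1 D1 f (g x) Hf Dgx). pose proof (C2_c2 D1 f (g x) Hf Dgx).
    apply cpt_plus; apply cpt_mult; auto; try apply cpt_mult; auto; apply cpt_comp; auto.
Qed.

Lemma is_derive_eq (f : R -> R) (x l l' : R) : is_derive f x l -> l = l' -> is_derive f x l'.
Proof. intros H E; subst; auto. Qed.

Lemma conv_minmax D a b z : convD D -> D a -> D b -> Rmin a b <= z <= Rmax a b -> D z.
Proof.
  intros Dcv Ha Hb Hz. destruct (Rle_dec a b).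
  - rewrite Rmin_left, Rmax_right in Hz by lra. apply (Dcv a b); auto.
  - rewrite Rmin_right, Rmax_left in Hz by lra. apply (Dcv b a); auto.
Qed.

Section Struct.
Context {Theta : Type} (mu sigma : Theta -> R -> R) (xl xr : Rbar) (xstar : R).
Hypothesis Hxstar : inX xl xr xstar.
Hypothesis Hsig_pos : forall th x, inX xl xr x -> 0 < sigma th x.
Hypothesis Hsig2 : forall th, C2_on (inX xl xr) (fun x => (sigma th x) ^ 2).

Let D := inX xl xr.
Let Dop : openD D := inX_open xl xr.
Let Dcv : convD D := inX_conv xl xr.

Lemma sig_der th x : D x -> is_derive (sigma th) x (Derive (fun t => sigma th t ^ 2) x / (2 * sigma th x)).
Proof.
  intros Dx. apply (is_derive_ext_loc (fun t => sqrt (sigma th t ^ 2))).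
  - eapply filter_imp; [|apply (openD_locally D x Dop Dx)].
    intros t Dt. simpl. apply sqrt_pow2. left. apply Hsig_pos. auto.
  - pose proof (is_derive_sqrt (fun t => sigma th t ^ 2) x _ (C2_d1 D _ x (Hsig2 th) Dx)) as K.
    cbv beta in K. rewrite sqrt_pow2 in K by (left; apply Hsig_pos; auto). apply K.
    apply pow_lt. apply Hsig_pos; auto.
Qed.

Lemma sig_d th x : D x -> is_derive (sigma th) x (Derive (sigma th) x).
Proof. intros Dx. apply Derive_correct. eexists. apply sig_der; auto. Qed.

Lemma sig_c0 th x : D x -> continuity_pt (sigma th) x.
Proof. intros Dx. apply derive_cpt. eexists. apply sig_der; auto. Qed.

Lemma sig_c1 th x : D x -> continuity_pt (Derive (sigma th)) x.
Proof.
  intros Dx. apply cpt_cont.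
  apply (continuous_ext_loc _ (fun t => Derive (fun t => sigma th t ^ 2) t / (2 * sigma th t))).
  - eapply filter_imp; [|apply (Derive_loc D (sigma th) _ x Dop Dx (fun z Dz => sig_der th z Dz))].
    intros t E; simpl; auto.
  - apply cont_cpt. apply cpt_mult. apply (C2_c1 D); auto. apply cpt_inv.
    apply cpt_mult. apply cpt_const. apply sig_c0; auto.
    pose proof (Hsig_pos th x Dx). lra.
Qed.

Lemma gam_d th x : D x -> is_derive (gamma sigma xstar th) x (/ sigma th x).
Proof.
  intros Dx. unfold gamma.
  apply (is_derive_RInt (fun z => / sigma th z) _ xstar).
  - eapply filter_imp; [|apply (openD_locally D x Dop Dx)].
    intros b Db. apply (@RInt_correct R_CompleteNormedModule). apply (@ex_RInt_continuous R_CompleteNormedModule).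
    intros z Hz. assert (Dz : D z) by (apply (conv_minmax D xstar b); auto).
    apply cont_cpt. apply cpt_inv. apply sig_c0; auto. pose proof (Hsig_pos th z Dz); lra.
  - apply cont_cpt. apply cpt_inv. apply sig_c0; auto. pose proof (Hsig_pos th x Dx); lra.
Qed.

Lemma gam_inc th : forall x y, D x -> D y -> x < y -> gamma sigma xstar th x < gamma sigma xstar th y.
Proof.
  apply (incr_of_deriv D _ (fun x => / sigma th x) Dcv).
  intros x Dx. split. apply gam_d; auto. apply Rinv_0_lt_compat, Hsig_pos; auto.
Qed.

Lemma gam_ex th x : D x -> ex_derive (gamma sigma xstar th) x.
Proof. intros. eexists; apply gam_d; auto. Qed.

Lemma gamma_inv_eq th u : gamma_inv sigma xl xr xstar th u = inv D (gamma sigma xstar th) u.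
Proof. reflexivity. Qed.

Lemma ginv_d th u : img D (gamma sigma xstar th) u ->
  is_derive (inv D (gamma sigma xstar th)) u (sigma th (inv D (gamma sigma xstar th) u)).
Proof.
  intros Hu. destruct (inv_spec D _ u Hu) as [Dx Ex].
  assert (E : Derive (gamma sigma xstar th) (inv D (gamma sigma xstar th) u) = / sigma th (inv D (gamma sigma xstar th) u))
    by (apply is_derive_unique, gam_d; auto).
  pose proof (Hsig_pos th _ Dx).
  eapply is_derive_eq.
  { apply (inv_derive D _ Dop Dcv (gam_inc th) (gam_ex th)); auto.
    rewrite E. apply Rinv_neq_0_compat. lra. }
  rewrite E. rewrite Rinv_inv. reflexivity.
Qed.

Section V.
Variables (th : Theta) (V : R -> R).
Hypothesis HV : admissible xl xr V.
Let Vinc := proj1 HV.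
Let VC2 := proj1 (proj2 HV).
Let Vpos := proj2 (proj2 HV).
Let U := inv D V.
Let Vex : forall x, D x -> ex_derive V x := fun x Dx => proj1 (VC2 x Dx).

Lemma U_eq : Uinv xl xr V = U.
Proof. reflexivity. Qed.

Lemma dU y : img D V y -> is_derive U y (/ Derive V (U y)).
Proof.
  intros Hy. destruct (inv_spec D V y Hy) as [Dx Ex]. change (inv D V y) with (U y) in Dx, Ex.
  apply (inv_derive D V Dop Dcv Vinc Vex); auto. pose proof (Vpos _ Dx); unfold U in *; lra.
Qed.

Lemma dU_loc y : img D V y -> locally y (fun z => Derive U z = / Derive V (U z)).
Proof.
  intros Hy. apply (Derive_loc (img D V) U (fun z => / Derive V (U z)) y
    (img_open D V Dop Dcv Vinc Vex) Hy dU).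
Qed.

Lemma ddU y : img D V y ->
  is_derive (Derive U) y (- (Derive (Derive V) (U y) * / Derive V (U y)) / (Derive V (U y)) ^ 2).
Proof.
  intros Hy. destruct (inv_spec D V y Hy) as [Dx Ex]. change (inv D V y) with (U y) in Dx, Ex.
  apply (is_derive_ext_loc (fun z => / Derive V (U z))).
  - eapply filter_imp; [|apply (dU_loc y Hy)]. intros z E; simpl; auto.
  - eapply is_derive_eq. apply (is_derive_inv (fun z => Derive V (U z))).
    apply (is_derive_comp' (Derive V) U). apply (C2_d2 D); auto.
    apply dU; auto. simpl. pose proof (Vpos _ Dx); lra. reflexivity.
Qed.

Lemma sigY y : img D V y -> sigmaY sigma xl xr th V y = sigma th (U y) * Derive V (U y).
Proof.
  intros Hy. destruct (inv_spec D V y Hy) as [Dx Ex]. change (inv D V y) with (U y) in Dx, Ex. pose proof (Vpos _ Dx).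
  unfold sigmaY. change (Uinv xl xr V) with U. rewrite (is_derive_unique _ _ _ (dU y Hy)). field. lra.
Qed.

Lemma muYe y : img D V y -> muY mu sigma xl xr th V y =
  mu th (U y) * Derive V (U y) + / 2 * sigma th (U y) ^ 2 * Derive (Derive V) (U y).
Proof.
  intros Hy. destruct (inv_spec D V y Hy) as [Dx Ex]. change (inv D V y) with (U y) in Dx, Ex. pose proof (Vpos _ Dx).
  unfold muY. change (Uinv xl xr V) with U. rewrite (is_derive_unique _ _ _ (dU y Hy)).
  rewrite (is_derive_unique _ _ _ (ddU y Hy)). field. lra.
Qed.

Lemma dsigY y : img D V y -> is_derive (sigmaY sigma xl xr th V) y
  ((Derive (sigma th) (U y) * Derive V (U y) + sigma th (U y) * Derive (Derive V) (U y)) * / Derive V (U y)).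
Proof.
  intros Hy. destruct (inv_spec D V y Hy) as [Dx Ex]. change (inv D V y) with (U y) in Dx, Ex. pose proof (Vpos _ Dx).
  apply (is_derive_ext_loc (fun z => sigma th (U z) * Derive V (U z))).
  - eapply filter_imp; [|apply (openD_locally (img D V) y (img_open D V Dop Dcv Vinc Vex) Hy)].
    intros z Hz. simpl. rewrite sigY; auto.
  - eapply is_derive_eq. apply (is_derive_mult' (fun z => sigma th (U z)) (fun z => Derive V (U z))).
    apply (is_derive_comp' (sigma th) U). apply sig_d; auto. apply dU; auto.
    apply (is_derive_comp' (Derive V) U). apply (C2_d2 D); auto. apply dU; auto.
    field. lra.
Qed.

Lemma dL y : img D V y -> is_derive (fun z => gamma sigma xstar th (U z)) y
   (/ sigmaY sigma xl xr th V y).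
Proof.
  intros Hy. destruct (inv_spec D V y Hy) as [Dx Ex]. change (inv D V y) with (U y) in Dx, Ex. pose proof (Vpos _ Dx).
  pose proof (Hsig_pos th _ Dx).
  eapply is_derive_eq. apply (is_derive_comp' (gamma sigma xstar th) U).
  apply gam_d; auto. apply dU; auto.
  rewrite sigY; auto. field. lra.
Qed.

Lemma KEY y : img D V y ->
  muXbar mu sigma xl xr xstar th (gamma sigma xstar th (U y)) =
  muY mu sigma xl xr th V y / sigmaY sigma xl xr th V y - / 2 * Derive (sigmaY sigma xl xr th V) y.
Proof.
  intros Hy. destruct (inv_spec D V y Hy) as [Dx Ex]. change (inv D V y) with (U y) in Dx, Ex. pose proof (Vpos _ Dx).
  pose proof (Hsig_pos th _ Dx).
  rewrite (is_derive_unique _ _ _ (dsigY y Hy)), sigY, muYe by auto.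
  unfold muXbar. rewrite gamma_inv_eq. fold D.
  rewrite (inv_f D _ (gam_inc th)) by auto. field. lra.
Qed.

End V.
End Struct.

Theorem corollary4
  (Theta : Type) (mu sigma : Theta -> R -> R) (xl xr : Rbar)
  (Hlr : Rbar_lt xl xr)
  (xstar : R) (Hxstar : inX xl xr xstar)
  (Hmu : forall th, C2_on (inX xl xr) (mu th))
  (Hsig_pos : forall th x, inX xl xr x -> 0 < sigma th x)
  (Hsig2 : forall th, C2_on (inX xl xr) (fun x => (sigma th x) ^ 2))
  (theta : Theta) (V : R -> R) (HV : admissible xl xr V) :
  identified mu sigma xl xr theta V <->
  ~ (exists (theta' : Theta) (eta : R),
       (theta' <> theta \/ eta <> 0) /\
       (forall xb, inXbar sigma xl xr xstar theta' xb <->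
                   inXbar sigma xl xr xstar theta (xb + eta)) /\
       (forall xb, inXbar sigma xl xr xstar theta' xb ->
          muXbar mu sigma xl xr xstar theta' xb =
          muXbar mu sigma xl xr xstar theta (xb + eta))).
Proof.
  set (D := inX xl xr).
  pose proof (inX_open xl xr) as Dop. pose proof (inX_conv xl xr) as Dcv. fold D in Dop, Dcv.
  pose proof (KEY mu sigma xl xr xstar Hxstar Hsig_pos Hsig2) as KEY'.
  pose proof (dL sigma xl xr xstar Hxstar Hsig_pos Hsig2) as dL'.
  pose proof (gam_inc sigma xl xr xstar Hxstar Hsig_pos Hsig2) as ginc.
  pose proof (gam_d sigma xl xr xstar Hxstar Hsig_pos Hsig2) as gd.
  assert (Vfacts : forall W, admissible xl xr W ->
     (forall x y, D x -> D y -> x < y -> W x < W y) /\ (forall x, D x -> ex_derive W x)).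
  { intros W HW. split. apply HW. intros x Dx. apply (proj1 (proj2 HW) x Dx). }
  split.
  -
    intros Hid [th' [eta [Hne [Hdom Hmuq]]]].
    destruct (Vfacts V HV) as [Vinc Vex].
    set (g := gamma sigma xstar theta).
    set (G := inv D g).
    set (Xb := img D g).
    set (h := fun x => gamma sigma xstar th' x + eta).
    set (W := fun x => V (G (h x))).
    assert (gex : forall x, D x -> ex_derive g x) by (intros; eexists; apply gd; auto).
    assert (Xop : openD Xb) by (apply img_open; auto; apply ginc).
    assert (HhX : forall x, D x -> Xb (h x)).
    { intros x Dx. apply (proj1 (Hdom (gamma sigma xstar th' x))). exists x; auto. }
    assert (GD : forall u, Xb u -> D (G u)) by (intros u Hu; apply (inv_spec D g u Hu)).
    assert (gG : forall u, Xb u -> g (G u) = u) by (intros u Hu; apply (inv_spec D g u Hu)).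
    assert (Gg : forall x, D x -> G (g x) = x) by (intros; apply (inv_f D g (ginc theta)); auto).
    assert (dh : forall x, D x -> is_derive h x (/ sigma th' x)).
    { intros x Dx. eapply is_derive_eq.
      apply (is_derive_plus (gamma sigma xstar th') (fun _ => eta)). apply gd; auto.
      apply is_derive_const. unfold plus, zero. simpl. ring. }
    assert (dG : forall u, Xb u -> is_derive G u (sigma theta (G u))).
    { intros u Hu. apply (ginv_d sigma xl xr xstar Hxstar Hsig_pos Hsig2 theta u Hu). }
    assert (C2h : C2_on D h).
    { apply (C2_intro D h (fun x => / sigma th' x)
        (fun x => - Derive (sigma th') x * / (sigma th' x * sigma th' x))); auto.
      intros x Dx. pose proof (Hsig_pos th' x Dx). split; [auto|split].
      - eapply is_derive_eq. apply (is_derive_inv (sigma th')).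
        apply (sig_d sigma xl xr Hsig_pos Hsig2 th' x Dx). lra. simpl. field. lra.
      - apply cpt_mult. apply cpt_opp. apply (sig_c1 sigma xl xr Hsig_pos Hsig2 th' x Dx).
        apply cpt_inv. apply cpt_mult; apply (sig_c0 sigma xl xr Hsig_pos Hsig2 th' x Dx).
        apply Rgt_not_eq. apply Rmult_lt_0_compat; lra. }
    assert (C2G : C2_on Xb G).
    { apply (C2_intro Xb G (fun u => sigma theta (G u))
        (fun u => Derive (sigma theta) (G u) * sigma theta (G u))); auto.
      intros u Hu. split; [auto|split].
      - apply (is_derive_comp' (sigma theta) G).
        apply (sig_d sigma xl xr Hsig_pos Hsig2 theta (G u) (GD u Hu)). auto.
      - assert (cG : continuity_pt G u) by (apply (inv_cont D g Dop Dcv (ginc theta) gex); auto).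
        apply cpt_mult; apply cpt_comp; auto.
        + apply (sig_c1 sigma xl xr Hsig_pos Hsig2 theta (G u) (GD u Hu)).
        + apply (sig_c0 sigma xl xr Hsig_pos Hsig2 theta (G u) (GD u Hu)). }
    assert (Winc : forall x y, D x -> D y -> x < y -> W x < W y).
    { intros x y Dx Dy hxy. unfold W. apply Vinc; [apply GD, HhX; auto|apply GD, HhX; auto|].
      apply (inv_incr D g (ginc theta)); [apply HhX; auto|apply HhX; auto|]. unfold h.
      pose proof (ginc th' x y Dx Dy hxy). lra. }
    assert (dW : forall x, D x -> is_derive W x
        (Derive V (G (h x)) * (sigma theta (G (h x)) * / sigma th' x))).
    { intros x Dx. unfold W. apply (is_derive_comp' V (fun x => G (h x))).
      apply Derive_correct. apply Vex; auto.
      apply (is_derive_comp' G h); auto. }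
    assert (HW : admissible xl xr W).
    { split; [exact Winc|split].
      - apply (C2_comp D D V (fun x => G (h x))); auto.
        apply HV. apply (C2_comp Xb D G h); auto.
      - intros x Dx. rewrite (is_derive_unique _ _ _ (dW x Dx)).
        pose proof (Hsig_pos th' x Dx). pose proof (Hsig_pos theta _ (GD _ (HhX x Dx))).
        pose proof (proj2 (proj2 HV) _ (GD _ (HhX x Dx))).
        apply Rmult_lt_0_compat; auto. apply Rmult_lt_0_compat; auto.
        apply Rinv_0_lt_compat; auto. }
    destruct (Vfacts W HW) as [_ Wex].
    assert (Himg : forall y, img D V y <-> img D W y).
    { intros y. split.
      - intros [x0 [Dx0 E]].
        assert (Hb : inXbar sigma xl xr xstar th' (g x0 - eta)).
        { apply Hdom. replace (g x0 - eta + eta) with (g x0) by ring. exists x0; auto. }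
        destruct Hb as [x [Dx Ex]]. exists x. split; auto. unfold W, h.
        rewrite Ex. replace (g x0 - eta + eta) with (g x0) by ring. rewrite Gg; auto.
      - intros [x [Dx E]]. exists (G (h x)). split; [apply GD, HhX; auto| exact E]. }
    set (UW := inv D W). set (U := inv D V).
    assert (Rel : forall y, img D V y -> gamma sigma xstar th' (UW y) = g (U y) - eta).
    { intros y Hy. assert (HyW : img D W y) by (apply Himg; auto).
      destruct (inv_spec D W y HyW) as [Dx' Ex']. fold UW in Dx', Ex'.
      assert (E : G (h (UW y)) = U y).
      { assert (E0 : V (G (h (UW y))) = y) by exact Ex'.
        transitivity (inv D V (V (G (h (UW y))))).
        symmetry. apply (inv_f D V Vinc _ (GD _ (HhX _ Dx'))).
        rewrite E0. reflexivity. }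
      rewrite <- E. rewrite gG by (apply HhX; auto). unfold h. ring. }
    assert (Iop : openD (img D V)) by (apply img_open; auto).
    assert (Hsig : forall y, img D V y -> sigmaY sigma xl xr theta V y = sigmaY sigma xl xr th' W y).
    { intros y Hy. assert (HyW : img D W y) by (apply Himg; auto).
      pose proof (dL' th' W HW y HyW) as K1. fold D UW in K1.
      assert (K2 : is_derive (fun z => gamma sigma xstar th' (UW z)) y (/ sigmaY sigma xl xr theta V y)).
      { apply (is_derive_ext_loc (fun z => g (U z) - eta)).
        - eapply filter_imp; [|apply (openD_locally _ y Iop Hy)].
          intros z Hz. rewrite Rel; auto.
        - eapply is_derive_eq. apply (is_derive_minus (fun z => g (U z)) (fun _ => eta)).
          apply (dL' theta V HV y Hy). apply is_derive_const.
          unfold minus, plus, opp, zero. simpl. ring. }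
      pose proof (is_derive_unique _ _ _ K1) as E1. pose proof (is_derive_unique _ _ _ K2) as E2.
      rewrite E1 in E2. rewrite <- (Rinv_inv (sigmaY sigma xl xr theta V y)), <- E2, Rinv_inv.
      reflexivity. }
    assert (Hequiv : obs_equiv mu sigma xl xr theta V th' W).
    { split; [exact Himg|]. intros y Hy. split; [|apply Hsig; auto].
      assert (HyW : img D W y) by (apply Himg; auto).
      destruct (inv_spec D V y Hy) as [Dx Ex]. fold U in Dx, Ex.
      assert (spos : 0 < sigmaY sigma xl xr theta V y).
      { rewrite (sigY sigma xl xr theta V HV y Hy). apply Rmult_lt_0_compat.
        apply Hsig_pos; auto. apply (proj2 (proj2 HV)); auto. }
      pose proof (KEY' th' W HW y HyW) as K1. pose proof (KEY' theta V HV y Hy) as K2.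
      fold D UW U in K1, K2.
      assert (M : muXbar mu sigma xl xr xstar th' (gamma sigma xstar th' (UW y)) =
                  muXbar mu sigma xl xr xstar theta (gamma sigma xstar theta (U y))).
      { rewrite Hmuq. rewrite Rel; auto. fold g. f_equal. ring.
        destruct (inv_spec D W y HyW) as [Dx' Ex']. exists (UW y); auto. }
      rewrite K1, K2 in M.
      assert (ED : Derive (sigmaY sigma xl xr th' W) y = Derive (sigmaY sigma xl xr theta V) y).
      { apply Derive_ext_loc.
        eapply filter_imp; [|apply (openD_locally _ y Iop Hy)].
        intros z Hz. symmetry. apply (Hsig z Hz). }
      rewrite ED, <- (Hsig y Hy) in M.
      assert (M2 : muY mu sigma xl xr th' W y / sigmaY sigma xl xr theta V y =
                   muY mu sigma xl xr theta V y / sigmaY sigma xl xr theta V y) by lra.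
      apply (f_equal (fun t => t * sigmaY sigma xl xr theta V y)) in M2.
      field_simplify in M2; try lra. }
    destruct (Hid th' W HW Hequiv) as [Eth EW].
    subst th'. destruct Hne as [Hne|Hne]; [apply Hne; auto|].
    apply Hne. pose proof (EW xstar Hxstar) as E. unfold W in E.
    pose proof (HhX xstar Hxstar) as Hx.
    assert (E2 : G (h xstar) = xstar) by (apply (f_inj D V Vinc); auto).
    pose proof (gG _ Hx) as E3. rewrite E2 in E3. unfold h in E3. fold g in E3. lra.
  - intros Hnb th' V' HV' [Himg Heq].
    destruct (Vfacts V HV) as [Vinc Vex]. destruct (Vfacts V' HV') as [V'inc V'ex].
    set (U := inv D V). set (U' := inv D V').
    set (L := fun y => gamma sigma xstar theta (U y)).
    set (L' := fun y => gamma sigma xstar th' (U' y)).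
    assert (Iop : openD (img D V)) by (apply img_open; auto).
    assert (Icv : convD (img D V)).
    { intros a b z Ha Hb Hz. apply (img_conv D V Dcv Vinc Vex a b z); auto. }
    assert (dLL : forall y, img D V y -> is_derive (fun z => L' z - L z) y 0).
    { intros y Hy. assert (Hy' : img D V' y) by (apply Himg; exact Hy).
      eapply is_derive_eq. apply (is_derive_minus L' L).
      apply (dL' th' V' HV' y Hy'). apply (dL' theta V HV y Hy).
      destruct (Heq y Hy) as [_ E]. rewrite E. unfold minus, plus, opp. simpl. ring. }
    set (y0 := V xstar).
    assert (Hy0 : img D V y0) by (exists xstar; split; auto).
    assert (Hconst : forall y, img D V y -> L' y - L y = L' y0 - L y0).
    { intros y Hy.
      destruct (MVT_gen (fun z => L' z - L z) y0 y (fun _ => 0)) as [c [Hc E]].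
      - intros z Hz. apply dLL. apply (conv_minmax (img D V) y0 y); auto; lra.
      - intros z Hz. apply derive_cpt. eexists. apply dLL. apply (conv_minmax (img D V) y0 y); auto.
      - simpl in E. lra. }
    set (c := L' y0 - L y0) in *. clearbody c.
    set (eta := - c).
    assert (Hdom : forall xb, inXbar sigma xl xr xstar th' xb <->
                   inXbar sigma xl xr xstar theta (xb + eta)).
    { intros xb. split.
      - intros [x [Dx Ex]]. assert (Hy' : img D V' (V' x)) by (exists x; auto).
        assert (Hy : img D V (V' x)) by (apply Himg; auto).
        pose proof (Hconst _ Hy) as K. unfold L' in K.
        unfold U' in K. rewrite (inv_f D V' V'inc x Dx) in K. fold U' in K.
        exists (U (V' x)). split. apply (inv_spec D V _ Hy).
        unfold L in K. unfold eta. lra.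
      - intros [x [Dx Ex]]. assert (Hy : img D V (V x)) by (exists x; auto).
        assert (Hy' : img D V' (V x)) by (apply Himg; auto).
        pose proof (Hconst _ Hy) as K. unfold L in K.
        unfold U in K. rewrite (inv_f D V Vinc x Dx) in K. fold U in K.
        exists (U' (V x)). split. apply (inv_spec D V' _ Hy').
        unfold L' in K. unfold eta in Ex. lra. }
    assert (Hsl : locally y0 (fun _ => True)) by (exists (mkposreal 1 Rlt_0_1); auto).
    assert (Hmuq : forall xb, inXbar sigma xl xr xstar th' xb ->
          muXbar mu sigma xl xr xstar th' xb =
          muXbar mu sigma xl xr xstar theta (xb + eta)).
    { intros xb [x [Dx Ex]]. assert (Hy' : img D V' (V' x)) by (exists x; auto).
      assert (Hy : img D V (V' x)) by (apply Himg; auto).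
      set (y := V' x) in *.
      pose proof (Hconst _ Hy) as K. unfold L, L' in K. fold U U' in K.
      assert (E1 : U' y = x) by (apply (inv_f D V' V'inc x Dx)).
      rewrite E1 in K.
      replace (xb + eta) with (gamma sigma xstar theta (U y)) by (unfold eta; lra).
      rewrite <- Ex, <- E1.
      pose proof (KEY' th' V' HV' y Hy') as K1. pose proof (KEY' theta V HV y Hy) as K2.
      fold D in K1, K2. fold U U' in K1, K2. rewrite K1, K2.
      destruct (Heq y Hy) as [E2 E3]. rewrite E2, E3.
      assert (ED : Derive (sigmaY sigma xl xr th' V') y = Derive (sigmaY sigma xl xr theta V) y).
      { apply Derive_ext_loc.
        eapply filter_imp; [|apply (openD_locally _ y Iop Hy)].
        intros z Hz. symmetry. apply (Heq z Hz). }
      rewrite ED. reflexivity. }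
    assert (Eth : th' = theta).
    { destruct (classic (th' = theta)) as [h|h]; auto. exfalso. apply Hnb.
      exists th', eta. split; [left; auto| split; auto]. }
    assert (Eeta : eta = 0).
    { destruct (Req_dec eta 0) as [h|h]; auto. exfalso. apply Hnb.
      exists th', eta. split; [right; auto| split; auto]. }
    subst th'. split; auto.
    intros x Dx. assert (Hy : img D V (V x)) by (exists x; auto).
    assert (Hy' : img D V' (V x)) by (apply Himg; auto).
    pose proof (Hconst _ Hy) as K. unfold eta in Eeta. unfold L, L' in K.
    assert (E1 : U (V x) = x) by (apply (inv_f D V Vinc x Dx)).
    destruct (inv_spec D V' _ Hy') as [D2 E2].
    assert (E3 : U' (V x) = x).
    { apply (f_inj D (gamma sigma xstar theta) (ginc theta)); auto.
      rewrite E1 in K. lra. }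
    rewrite <- E3 at 1. exact E2.
Qed.
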